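(* Let $\mathfrak{g}$ be a finite-dimensional complex nilpotent Lie algebra which is not a pre-Engel-$4$ Lie algebra. Then $\mathfrak{g}$ does not admit a periodic prederivation.
   Context: A Lie algebra $\mathfrak{g}$ is a pre-Engel-$4$ Lie algebra if the linear span of $\{x\in\mathfrak{g}\mid \mathrm{ad}(x)^4=0\}$ equals $\mathfrak{g}$. A linear map $P:\mathfrak{g}\to\mathfrak{g}$ is a prederivation if $P([x,[y,z]])=[P(x),[y,z]]+[x,[P(y),z]]+[x,[y,P(z)]]$ for all $x,y,z\in\mathfrak{g}$; it is periodic if $P^m=\mathrm{id}$ for some integer $m\ge 1$. *)

(* Defs.v *)
From HB Require Import structures.
From mathcomp Require Import all_boot all_order all_algebra.
From mathcomp Require Import complex.
From mathcomp Require Import Rstruct.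
Set Implicit Arguments. Unset Strict Implicit. Unset Printing Implicit Defensive.
Import Order.TTheory GRing.Theory Num.Theory.
Local Open Scope ring_scope.

Definition CC : fieldType := complex Rdefinitions.R.

Record is_lie_bracket (K : fieldType) (V : lmodType K) (br : V -> V -> V)
  : Prop := {
  lie_linl : forall (a : K) (x y z : V), br (a *: x + y) z = a *: br x z + br y z;
  lie_linr : forall (a : K) (x y z : V), br x (a *: y + z) = a *: br x y + br x z;
  lie_alt  : forall x : V, br x x = 0;
  lie_jacobi : forall x y z : V,
      br x (br y z) + br y (br z x) + br z (br x y) = 0
}.

Definition ad (K : fieldType) (V : lmodType K) (br : V -> V -> V) (x : V) : V -> V :=
  br x.

(* Nilpotent: some n with ad x_1 o ... o ad x_n = 0 for all x_1,...,x_n,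
   i.e. the lower central series reaches 0 (g^{n+1} = 0). *)
Definition lie_nilpotent (K : fieldType) (V : lmodType K) (br : V -> V -> V) : Prop :=
  exists n : nat, forall (s : seq V) (y : V),
    size s = n -> foldr (fun x acc => br x acc) y s = 0.

Definition ad4_zero (K : fieldType) (V : lmodType K) (br : V -> V -> V) (x : V) : Prop :=
  forall y : V, iter 4 (ad br x) y = 0.

Definition pre_Engel4 (K : fieldType) (V : vectType K) (br : V -> V -> V) : Prop :=
  exists s : seq V, (forall x, x \in s -> ad4_zero br x) /\ (<<s>> = fullv)%VS.

Definition is_prederivation (K : fieldType) (V : lmodType K) (br : V -> V -> V)
  (P : {linear V -> V}) : Prop :=
  forall x y z : V,
    P (br x (br y z)) = br (P x) (br y z) + br x (br (P y) z) + br x (br y (P z)).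

Definition periodic (K : fieldType) (V : lmodType K) (P : V -> V) : Prop :=
  exists m : nat, (1 <= m)%N /\ forall x : V, iter m P x = x.

(* Main.v *)
Require Import Defs.
From HB Require Import structures.
From mathcomp Require Import all_boot all_order all_algebra all_field.
From mathcomp Require Import cyclic.
From mathcomp Require Import complex.
From mathcomp Require Import Rstruct.
From mathcomp Require Import ring.
Set Implicit Arguments. Unset Strict Implicit. Unset Printing Implicit Defensive.
Import Order.TTheory GRing.Theory Num.Theory.
Local Open Scope ring_scope.

Lemma CC_prim_root_exists n : (n > 0)%N -> exists z : CC, n.-primitive_root z.
Proof.
pose p : {poly CC} := 'X^n - 1; have [r Dp] := closed_field_poly_normal p.
move=> n_gt0; rewrite (monicP _) ?monicXnsubC // scale1r in Dp.
have rn1: all n.-unity_root r by apply/allP=> z; rewrite -root_prod_XsubC -Dp.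
have sz_r: (n < (size r).+1)%N.
  by rewrite -(size_prod_XsubC r id) -Dp size_XnsubC.
have [|z] := hasP (has_prim_root n_gt0 rn1 _ sz_r); last by exists z.
by rewrite -separable_prod_XsubC -Dp separable_Xn_sub_1 // pnatr_eq0 -lt0n.
Qed.

Section S.
Variables (V : vectType CC) (br : V -> V -> V) (Hl : is_lie_bracket br).

Lemma brDr x y z : br x (y + z) = br x y + br x z.
Proof. by have := lie_linr Hl 1 x y z; rewrite !scale1r. Qed.
Lemma br0r x : br x 0 = 0.
Proof. by apply: (@addrI _ (br x 0)); rewrite addr0 -brDr addr0. Qed.
Lemma brZr a x y : br x (a *: y) = a *: br x y.
Proof. by have := lie_linr Hl a x y 0; rewrite !addr0 br0r addr0. Qed.
Lemma brDl x y z : br (x + y) z = br x z + br y z.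
Proof. by have := lie_linl Hl 1 x y z; rewrite !scale1r. Qed.
Lemma br0l x : br 0 x = 0.
Proof. by apply: (@addrI _ (br 0 x)); rewrite addr0 -brDl addr0. Qed.
Lemma brZl a x y : br (a *: x) y = a *: br x y.
Proof. by have := lie_linl Hl a x 0 y; rewrite !addr0 br0l addr0. Qed.

Lemma ad4_sum x (s : seq V) :
  iter 4 (ad br x) (\sum_(u <- s) u) = \sum_(u <- s) iter 4 (ad br x) u.
Proof.
elim: s => [|u s IH]; first by rewrite !big_nil /ad /= !br0r.
by rewrite !big_cons -IH /ad /= !brDr.
Qed.

Variables (P : {linear V -> V}) (HP : is_prederivation br P).
Variables (m : nat) (m0 : (0 < m)%N) (Pm : forall x, iter m P x = x).

Lemma iterP u c : P u = c *: u -> forall k, iter k P u = c ^+ k *: u.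
Proof.
move=> h; elim=> [|k IH]; first by rewrite expr0 scale1r.
by rewrite iterS IH linearZZ h scalerA exprSr.
Qed.

Lemma eig_norm u c : P u = c *: u -> u = 0 \/ `|c| = 1.
Proof.
move=> h; have := Pm u; rewrite (iterP h) => /eqP.
rewrite -subr_eq0 -{2}[u]scale1r -scalerBl scaler_eq0 subr_eq0.
case/orP=> [/eqP hc|/eqP]; [right|by left].
have : `|c| ^+ m = 1 by rewrite -normrX hc normr1.
by move/eqP; rewrite pexpr_eq1 // => /eqP.
Qed.

Lemma eig_step x y a b : P x = a *: x -> P y = b *: y ->
  P (br x (br x y)) = (a + a + b) *: br x (br x y).
Proof.
move=> hx hy; rewrite HP hx hy brZl brZr !brZr brZl !scalerDl.
by rewrite brZr.
Qed.

Lemma ad4_eig x y a b : P x = a *: x -> P y = b *: y ->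
  iter 4 (ad br x) y = 0.
Proof.
move=> hx hy; rewrite /ad /=.
have h2 := eig_step hx hy; have h4 := eig_step hx h2.
have [->|na] := eig_norm hx; first by rewrite br0l.
have [->|nb] := eig_norm hy; first by rewrite !br0r.
have [//|nc] := eig_norm h4; exfalso.
have e : a + a + (a + a + b) = a *+ 4 + b by rewrite !mulrS mulr0n; ring.
rewrite e in nc.
have : `|a *+ 4| <= `|a *+ 4 + b| + `|b|.
  by have := ler_normB (a *+ 4 + b) b; rewrite addrK.
by rewrite normrMn na nc nb -(natrD _ 1 1) ler_nat.
Qed.

Variables (z : CC) (zp : m.-primitive_root z).

Definition E (k : nat) (v : V) := \sum_(j < m) (z ^+ k) ^+ j *: iter j P v.

Lemma E_eig k v : P (E k v) = (z ^+ k)^-1 *: E k v.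
Proof.
have am : (z ^+ k) ^+ m = 1 by rewrite exprAC (prim_expr_order zp) expr1n.
have a0 : z ^+ k != 0.
  by move: (oner_neq0 CC); rewrite -am expf_eq0 m0.
suff h : z ^+ k *: P (E k v) = E k v by rewrite -{2}h scalerA mulVf // scale1r.
rewrite /E linear_sum scaler_sumr.
have [n em] : exists n, m = n.+1 by case: (m) m0 => // n; exists n.
have Pm' := Pm; move: Pm' am; rewrite em => Pm' am.
rewrite big_ord_recr big_ord_recl /= addrC expr0 scale1r; congr (_ + _).
  by rewrite linearZZ scalerA -exprS am scale1r -iterS Pm'.
by apply: eq_bigr => i _; rewrite linearZZ scalerA -exprS -iterS.
Qed.

Lemma E_sum v : \sum_(k < m) E k v = m%:R *: v.
Proof.
rewrite /E exchange_big /=.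
under eq_bigr => j _ do under eq_bigr => k _ do rewrite exprAC.
under eq_bigr => j _ do rewrite -scaler_suml.
have [n em] : exists n, m = n.+1 by case: (m) m0 => // n; exists n.
have zp' := zp; rewrite em in zp' *.
rewrite big_ord_recl /= [X in _ + X]big1 ?addr0.
  by rewrite expr0 (eq_bigr (fun _ => 1)) ?sumr_const ?card_ord // => i _; rewrite expr1n.
move=> j _.
set w := z ^+ _.
have wm : w ^+ n.+1 = 1 by rewrite /w exprAC (prim_expr_order zp') expr1n.
have w1 : w != 1.
  rewrite /w -(expr0 z) (eq_prim_root_expr zp') mod0n /bump /= add1n modn_small //.
  by rewrite ltnS ltn_ord.
have : (w - 1) * (\sum_(i < n.+1) w ^+ i) = 0 by rewrite -subrX1 wm subrr.
by move/eqP; rewrite mulf_eq0 subr_eq0 (negbTE w1) /= => /eqP ->; rewrite scale0r.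
Qed.
End S.

Lemma ad4_sumF (V : vectType CC) (br : V -> V -> V) (Hl : is_lie_bracket br) x
  (I : Type) (r : seq I) (f : I -> V) :
  iter 4 (ad br x) (\sum_(i <- r) f i) = \sum_(i <- r) iter 4 (ad br x) (f i).
Proof.
elim: r => [|u s IH]; first by rewrite !big_nil /ad /= !(br0r Hl).
by rewrite !big_cons -IH /ad /= !(brDr Hl).
Qed.

Unset Implicit Arguments.
Theorem proposition5p11 (V : vectType CC) (br : V -> V -> V) :
  is_lie_bracket br -> lie_nilpotent br -> ~ pre_Engel4 br ->
  ~ (exists P : {linear V -> V}, is_prederivation br P /\ periodic P).
Proof.
move=> Hl _ nPE [P [HP [m [m1 Pm]]]]; apply: nPE.
have [z zp] := CC_prim_root_exists m1.
have mn0 : (m%:R : CC) != 0 by rewrite pnatr_eq0 -lt0n.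
pose F v (k : 'I_m) := (m%:R)^-1 *: E P m z k v.
have Fe : forall v k, P (F v k) = (z ^+ k)^-1 *: F v k.
  by move=> v k; rewrite linearZZ (E_eig m1 Pm zp) !scalerA mulrC.
have Fs : forall v, \sum_(k < m) F v k = v.
  by move=> v; rewrite -scaler_sumr (E_sum P m1 zp) scalerA mulVf // scale1r.
have ad4 : forall x a, P x = a *: x -> ad4_zero br x.
  move=> x a hx y; rewrite -(Fs y) (ad4_sumF Hl) big1 // => k _.
  exact: (ad4_eig Hl HP m1 Pm hx (Fe y k)).
exists [seq F v k | v <- vbasis fullv, k <- enum 'I_m]; split.
  by move=> x /allpairsP [[v k] [_ _ ->]]; exact: ad4 (Fe v k).
apply/eqP; rewrite eqEsubv subvf /=.
rewrite -{1}(span_basis (vbasisP fullv)); apply/span_subvP => v vin.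
rewrite -(Fs v); apply: rpred_sum => k _; apply: memv_span.
by apply/allpairsP; exists (v, k); rewrite mem_enum.
Qed.
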